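(* Let $d\ge1$, $n\ge3$ and $\lambda\in\mathcal{P}(d,n)$. Then $\lambda\in\mathcal{R}(d,n)$ if and only if the trivial representation of the subgroup $\langle s_1,s_2\rangle\cong\mathfrak{S}_3$ of $G(d,1,n)$ is not a direct summand of $\mathrm{Res}^{G(d,1,n)}_{\langle s_1,s_2\rangle}(E^\lambda)$.
   Context: Let $d,n\ge1$ be integers and $u$ an indeterminate. The Yokonuma–Hecke algebra $\mathrm{Y}_{d,n}(u)$ is the associative $\mathbb{C}[u,u^{-1}]$-algebra generated by $g_1,\dots,g_{n-1},t_1,\dots,t_n$ subject to: $g_ig_j=g_jg_i$ for $|i-j|>1$; $g_ig_{i+1}g_i=g_{i+1}g_ig_{i+1}$ for $1\le i\le n-2$; $t_it_j=t_jt_i$ for all $i,j$; $t_jg_i=g_it_{s_i(j)}$ for all $i,j$, where $s_i$ is the transposition $(i,i+1)$; $t_j^d=1$ for all $j$; and $g_i^2=1+(u-1)e_i+(u-1)e_ig_i$, where $e_i=\frac1d\sum_{s=0}^{d-1}t_i^st_{i+1}^{-s}$. For $n\ge3$, the Yokonuma–Temperley–Lieb algebra $\mathrm{YTL}_{d,n}(u)$ is the quotient of $\mathrm{Y}_{d,n}(u)$ by the two-sided ideal generated by the elements $g_ig_{i+1}g_i+g_ig_{i+1}+g_{i+1}g_i+g_i+g_{i+1}+1$, $1\le i\le n-2$. For a $\mathbb{C}[u,u^{-1}]$-algebra $B$, write $\mathbb{C}(u)B=\mathbb{C}(u)\otimes_{\mathbb{C}[u,u^{-1}]}B$. A $d$-partition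 of $n$ is a $d$-tuple $\lambda=(\lambda^{(0)},\dots,\lambda^{(d-1)})$ of partitions whose sizes sum to $n$; $\mathcal{P}(d,n)$ denotes the set of them. Let $G(d,1,n)=(\mathbb{Z}/d\mathbb{Z})^n\rtimes\mathfrak{S}_n$, with $s_i\in\mathfrak S_n\subset G(d,1,n)$ the transposition $(i,i+1)$. Its irreducible complex representations $E^\lambda$, $\lambda\in\mathcal P(d,n)$, are labelled in the standard (Specht) way: with $k_i=|\lambda^{(i)}|$, $E^\lambda$ is induced from $\prod_{i=0}^{d-1}G(d,1,k_i)$ of the outer tensor product whose $i$-th factor is the representation on which each coordinate of $(\mathbb Z/d\mathbb Z)^{k_i}$ acts by the character sending a generator to $\xi^i$ ($\xi$ a fixed primitive $d$-th root of unity) and $\mathfrak{S}_{k_i}$ acts through the Specht module of $\lambda^{(i)}$. The algebra $\mathbb{C}(u)\mathrm{Y}_{d,n}(u)$ is split semisimple with irreducible representations $\rho^\lambda$, $\lambda\in\mathcal P(d,n)$, where $\rho^\lambda$ specializes at $u=1$ to $E^\lambda$. Let $\mathcal{R}(d,n)$ be the set of $\lambda\in\mathcal P(d,n)$ such that $\rho^\lambda(g_1g_2g_1+g_1g_2+g_2g_1+g_1+g_2+1)=0$; equivalently the $\rho^\lambda$ with $\lambda\in\mathcal R(d,n)$ are exactly the irreducible representations of $\mathbb{C}(u)\mathrm{YTL}_{d,n}(u)$. *)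

(* Defs.v *)
From HB Require Import structures.
From mathcomp Require Import all_boot all_order all_algebra all_field.
Set Implicit Arguments. Unset Strict Implicit. Unset Printing Implicit Defensive.
Import Order.TTheory GRing.Theory Num.Theory.
Local Open Scope ring_scope.

(* The field C(u) of rational functions over the complex (algebraic) numbers,
   with u the indeterminate. *)
Definition Ku := {fraction {poly algC}}.
Definition polyK (p : {poly algC}) : Ku := tofrac p.
Definition uK : Ku := polyK 'X.

Definition swapi (i j : nat) : nat :=
  if j == i then i.+1 else if j == i.+1 then i else j.

Definition e_mx (F : fieldType) (N d : nat) (T : nat -> 'M[F]_N) (i : nat)
  : 'M[F]_N :=
  (d%:R)^-1 *: \sum_(s < d) (T i ^+ s *m (invmx (T i.+1)) ^+ s).

(* (G i)_{1<=i<=n-1}, (T j)_{1<=j<=n} are the images of g_i, t_j under a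
   representation of Y_{d,n}(u) (with u acting as the scalar u). *)
Definition YH_rep (F : fieldType) (N d n : nat) (u : F)
  (G T : nat -> 'M[F]_N) : Prop :=
  (forall i j, (1 <= i <= n.-1)%N -> (1 <= j <= n.-1)%N ->
     ((i.+1 < j) || (j.+1 < i))%N -> G i *m G j = G j *m G i) /\
  (forall i, (1 <= i)%N -> (i <= n - 2)%N ->
     G i *m G i.+1 *m G i = G i.+1 *m G i *m G i.+1) /\
  (forall i j, (1 <= i <= n)%N -> (1 <= j <= n)%N -> T i *m T j = T j *m T i) /\
  (forall i j, (1 <= i <= n.-1)%N -> (1 <= j <= n)%N ->
     T j *m G i = G i *m T (swapi i j)) /\
  (forall j, (1 <= j <= n)%N -> T j ^+ d = 1%:M) /\
  (forall i, (1 <= i <= n.-1)%N ->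
     G i *m G i = 1%:M + (u - 1) *: e_mx d T i
                      + (u - 1) *: (e_mx d T i *m G i)).

Definition YH_irreducible (F : fieldType) (N n : nat) (G T : nat -> 'M[F]_N)
  : Prop :=
  (0 < N)%N /\
  forall U : 'M[F]_N,
    (forall i, (1 <= i <= n.-1)%N -> stablemx U (G i)) ->
    (forall j, (1 <= j <= n)%N -> stablemx U (T j)) ->
    (U == (0 : 'M[F]_N))%MS || row_full U.

Definition YTL_elt (F : fieldType) (N : nat) (G : nat -> 'M[F]_N) : 'M[F]_N :=
  G 1%N *m G 2%N *m G 1%N + G 1%N *m G 2%N + G 2%N *m G 1%N
  + G 1%N + G 2%N + 1%:M.

(* The trivial representation of the group generated by (the actions A, B of)
   s1, s2 is a direct summand of the module F^N: there is a line <v> on which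
   both act trivially and an invariant complement W with F^N = <v> (+) W. *)
Definition trivial_summand (F : fieldType) (N : nat) (A B : 'M[F]_N) : Prop :=
  exists (v : 'rV[F]_N) (W : 'M[F]_N),
    [/\ v != 0, v *m A = v & v *m B = v] /\
    [/\ stablemx W A, stablemx W B, (v :&: W)%MS == 0 & row_full (v + W)%MS].

(* Representation over C(u) given in "integral form": matrices over C[u]
   divided by a common denominator D with D(1) <> 0, i.e. with entries in the
   local ring C[u]_(u-1); and its specialization at u = 1. *)
Definition lift_rep (N : nat) (D : {poly algC}) (M : nat -> 'M[{poly algC}]_N)
  : nat -> 'M[Ku]_N :=
  fun i => (polyK D)^-1 *: map_mx polyK (M i).
Definition spec_rep (N : nat) (D : {poly algC}) (M : nat -> 'M[{poly algC}]_N)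
  : nat -> 'M[algC]_N :=
  fun i => (D.[1])^-1 *: map_mx (fun p => p.[1]) (M i).

(* Main.v *)
Require Import Defs.
From HB Require Import structures.
From mathcomp Require Import all_boot all_order all_algebra all_field.
From mathcomp Require Import ring.
Import GRing.Theory Num.Theory.
Local Open Scope ring_scope.

Ltac acstep := match goal with
 | |- ?a + _ = ?a + _ => congr (_ + _)
 | |- ?a + _ = ?b + ?a => rewrite [in RHS](addrC b a)
 | |- ?a + _ = _ => rewrite [in RHS](addrCA _ a)
 | |- ?a + _ = _ => rewrite [in RHS](addrC _ a)
 end.
Ltac ac := rewrite -?addrA; repeat (done || acstep).

Lemma sum6 (R : pzRingType) (c Z a b k e1 e2 : R) :
 Z + c * k * Z + (Z + c * a * Z) + (Z + c * b * Z) + (Z + c * e1 * Z) + (Z + c * e2 * Z) + Z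
 = Z *+ 6 + c * (e1 + e2 + a + b + k) * Z.
Proof.
have H (Z1 Z2 Z3 Z4 Z5 Z6 k' a' b' x y : R) :
  Z1 + k' + (Z2 + a') + (Z3 + b') + (Z4 + x) + (Z5 + y) + Z6 =
  Z1 + (Z2 + (Z3 + (Z4 + (Z5 + Z6)))) + (x + y + a' + b' + k') by ac.
by rewrite H !mulrDr !mulrDl !mulrS mulr0n addr0.
Qed.

Section Alg.
Variable R : pzRingType.
Variables c g1 g2 e1 e2 e13 : R.
Hypothesis cC : forall x, c * x = x * c.
Hypothesis Hq1 : g1 * g1 = 1 + c * e1 + c * (e1 * g1).
Hypothesis Hq2 : g2 * g2 = 1 + c * e2 + c * (e2 * g2).
Hypothesis Hbr : g1 * g2 * g1 = g2 * g1 * g2.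
Hypothesis Hc21 : g2 * e1 = e13 * g2.
Hypothesis Hc12 : g1 * e2 = e13 * g1.
Hypothesis Hc113 : g1 * e13 = e2 * g1.

Definition zz := g1 * g2 * g1 + g1 * g2 + g2 * g1 + g1 + g2 + 1.

Lemma quadF g e : g * g = 1 + c * e + c * (e * g) -> g * (1 + g) = (1 + c * e) * (1 + g).
Proof.
move=> H; rewrite mulrDr mulr1 H mulrDl mul1r mulrDr mulr1 mulrA; ac.
Qed.

Lemma zz1 : zz = (1 + g1) * (1 + g2 + g2 * g1).
Proof. rewrite /zz !mulrDl !mul1r !mulrDr !mulr1 ?mulrA; ac. Qed.

Lemma zz2 : zz = (1 + g2) * (1 + g1 + g1 * g2).
Proof. rewrite /zz Hbr !mulrDl !mul1r !mulrDr !mulr1 ?mulrA; ac. Qed.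

Lemma zz1r : zz = (1 + g2 + g1 * g2) * (1 + g1).
Proof. rewrite /zz !mulrDl !mul1r !mulrDr !mulr1 ?mulrA; ac. Qed.

Lemma zz2r : zz = (1 + g1 + g2 * g1) * (1 + g2).
Proof. rewrite /zz Hbr !mulrDl !mul1r !mulrDr !mulr1 ?mulrA; ac. Qed.

Lemma L1 : g1 * zz = (1 + c * e1) * zz.
Proof. by rewrite zz1 mulrA (@quadF _ _ Hq1 : g1 * (1 + g1) = _) -mulrA. Qed.
Lemma L2 : g2 * zz = (1 + c * e2) * zz.
Proof. by rewrite zz2 mulrA (@quadF _ _ Hq2 : g2 * (1 + g2) = _) -mulrA. Qed.

Lemma gstep g k k' Y : g * k = k' * g -> g * ((1 + c * k) * Y) = (1 + c * k') * (g * Y).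
Proof.
move=> H; rewrite !mulrA mulrDr mulr1 mulrA -cC -mulrA H.
by rewrite [in RHS]mulrDl mul1r mulrA.
Qed.

Lemma prod2 a b : (1 + c * a) * (1 + c * b) = 1 + c * (a + b + c * (a * b)).
Proof.
rewrite mulrDl mul1r !mulrDr mulr1 -mulrA [a * (c * b)]mulrA -cC -!mulrA; ac.
Qed.

Lemma prodY a Y : (1 + c * a) * Y = Y + c * a * Y.
Proof. by rewrite mulrDl mul1r. Qed.

Definition K12 := e13 + e1 + c * (e13 * e1).
Definition K21 := e13 + e2 + c * (e13 * e2).
Definition K21' := e2 + e13 + c * (e2 * e13).
Definition K121 := K21' + e1 + c * (K21' * e1).
Definition Ksum := e1 + e2 + K12 + K21 + K121.

Lemma zzsq : zz * zz = zz *+ 6 + c * Ksum * zz.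
Proof.
have E21 : g2 * g1 * zz = (1 + c * K21) * zz.
  by rewrite -mulrA L1 (@gstep _ _ _ _ Hc21) L2 mulrA prod2.
have E12 : g1 * g2 * zz = (1 + c * K12) * zz.
  by rewrite -mulrA L2 (@gstep _ _ _ _ Hc12) L1 mulrA prod2.
have E121 : g1 * g2 * g1 * zz = (1 + c * K121) * zz.
  have -> : g1 * g2 * g1 * zz = g1 * (g2 * g1 * zz) by rewrite !mulrA.
  have HK : g1 * K21 = K21' * g1.
    by rewrite /K21 /K21' !mulrDr !mulrDl !mulrA -cC Hc113 Hc12 -!mulrA [g1 * (e13 * e2)]mulrA Hc113 -mulrA Hc12 !mulrA.
  by rewrite E21 (@gstep _ _ _ _ HK) L1 mulrA prod2.
rewrite {1}/zz !mulrDl mul1r E21 E12 E121 L1 L2 /Ksum.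
move: zz K12 K21 K121 => Z a b k => {E21 E12 E121}.
by rewrite !prodY sum6.
Qed.
End Alg.

Set Implicit Arguments. Unset Strict Implicit. Unset Printing Implicit Defensive.

Notation PX := {poly algC}.
Definition ev1 (p : PX) : algC := p.[1].

Section EV.
Variable N : nat.

Lemma mapK_M (A B : 'M[PX]_N) : map_mx polyK (A *m B) = map_mx polyK A *m map_mx polyK B.
Proof. rewrite /polyK; apply: map_mxM. Qed.
Lemma mapK_D (A B : 'M[PX]_N) : map_mx polyK (A + B) = map_mx polyK A + map_mx polyK B.
Proof. rewrite /polyK; apply: map_mxD. Qed.
Lemma mapK_Z (a : PX) (A : 'M[PX]_N) : map_mx polyK (a *: A) = polyK a *: map_mx polyK A.
Proof. rewrite /polyK; apply: map_mxZ. Qed.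
Lemma mapK_1 : map_mx polyK (1%:M : 'M[PX]_N) = 1%:M.
Proof. rewrite /polyK; apply: map_mx1. Qed.
Lemma mapE_M (A B : 'M[PX]_N) : map_mx ev1 (A *m B) = map_mx ev1 A *m map_mx ev1 B.
Proof. exact: (map_mxM (horner_eval 1)). Qed.
Lemma mapE_D (A B : 'M[PX]_N) : map_mx ev1 (A + B) = map_mx ev1 A + map_mx ev1 B.
Proof. exact: (map_mxD (horner_eval 1)). Qed.
Lemma mapE_Z (a : PX) (A : 'M[PX]_N) : map_mx ev1 (a *: A) = ev1 a *: map_mx ev1 A.
Proof. exact: (map_mxZ (horner_eval 1)). Qed.
Lemma mapE_1 : map_mx ev1 (1%:M : 'M[PX]_N) = 1%:M.
Proof. exact: (map_mx1 (horner_eval 1)). Qed.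
Lemma polyK_eq0 p : (polyK p == 0) = (p == 0).
Proof. exact: tofrac_eq0. Qed.
Lemma polyKM p q : polyK (p * q) = polyK p * polyK q.
Proof. exact: tofracM. Qed.
Lemma ev1M p q : ev1 (p * q) = ev1 p * ev1 q.
Proof. exact: hornerM. Qed.
Lemma mapK_inj (A B : 'M[PX]_N) : map_mx polyK A = map_mx polyK B -> A = B.
Proof.
move=> H; apply/matrixP=> i j; move/matrixP: H => /(_ i j); rewrite !mxE.
by move/eqP; rewrite /polyK tofrac_eq => /eqP.
Qed.

Definition evrel (M : 'M[Ku]_N) (m : 'M[algC]_N) :=
  exists q (Q : 'M[PX]_N), [/\ ev1 q != 0, M = (polyK q)^-1 *: map_mx polyK Q
                            & m = (ev1 q)^-1 *: map_mx ev1 Q].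

Lemma nz_of_ev q : ev1 q != 0 -> q != 0.
Proof. by apply: contraNneq => ->; rewrite /ev1 horner0. Qed.

Lemma ev_uniq M m1 m2 : evrel M m1 -> evrel M m2 -> m1 = m2.
Proof.
move=> [q [Q [q1 -> ->]]] [r [R [r1 E ->]]].
have qn := nz_of_ev q1; have rn := nz_of_ev r1.
have qK : polyK q != 0 by rewrite polyK_eq0.
have rK : polyK r != 0 by rewrite polyK_eq0.
have : r *: Q = q *: R.
  apply: mapK_inj; rewrite !mapK_Z.
  move: (congr1 (fun X => (polyK q * polyK r) *: X) E).
  rewrite !scalerA => E'.
  have e1 : polyK q * polyK r * (polyK q)^-1 = polyK r by rewrite mulrAC (mulfV qK) mul1r.
  have e2 : polyK q * polyK r * (polyK r)^-1 = polyK q by rewrite -mulrA (mulfV rK) mulr1.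
  by rewrite -e1 E' e2.
move/(congr1 (map_mx ev1)); rewrite !mapE_Z => E2.
apply: (@scalerI _ _ (ev1 q * ev1 r)); first exact: (mulf_neq0 q1 r1).
rewrite !scalerA.
have -> : ev1 q * ev1 r * (ev1 q)^-1 = ev1 r by rewrite mulrAC (mulfV q1) mul1r.
have -> : ev1 q * ev1 r * (ev1 r)^-1 = ev1 q by rewrite -mulrA (mulfV r1) mulr1.
exact: E2.
Qed.

Lemma ev_add A a B b : evrel A a -> evrel B b -> evrel (A + B) (a + b).
Proof.
move=> [q [Q [q1 -> ->]]] [r [R [r1 -> ->]]].
have qK : polyK q != 0 by rewrite polyK_eq0 nz_of_ev.
have rK : polyK r != 0 by rewrite polyK_eq0 nz_of_ev.
exists (q * r), (r *: Q + q *: R); split.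
- by rewrite ev1M (mulf_neq0 q1 r1).
- rewrite mapK_D !mapK_Z polyKM scalerDr !scalerA invfM.
  by rewrite -[_ / _ * polyK r]mulrA (mulVf rK) mulr1 mulrAC (mulVf qK) mul1r.
- rewrite mapE_D !mapE_Z ev1M scalerDr !scalerA invfM.
  by rewrite -[_ / _ * ev1 r]mulrA (mulVf r1) mulr1 mulrAC (mulVf q1) mul1r.
Qed.

Lemma ev_mul A a B b : evrel A a -> evrel B b -> evrel (A *m B) (a *m b).
Proof.
move=> [q [Q [q1 -> ->]]] [r [R [r1 -> ->]]].
have qK : polyK q != 0 by rewrite polyK_eq0 nz_of_ev.
have rK : polyK r != 0 by rewrite polyK_eq0 nz_of_ev.
exists (q * r), (Q *m R); split.
- by rewrite ev1M (mulf_neq0 q1 r1).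
- by rewrite mapK_M polyKM -scalemxAl -scalemxAr scalerA invfM mulrC.
- by rewrite mapE_M ev1M -scalemxAl -scalemxAr scalerA invfM mulrC.
Qed.

Lemma ev_scaleK p A a : evrel A a -> evrel (polyK p *: A) (ev1 p *: a).
Proof.
move=> [q [Q [q1 -> ->]]]; exists q, (p *: Q); split => //.
- by rewrite mapK_Z !scalerA mulrC.
- by rewrite mapE_Z !scalerA mulrC.
Qed.

Lemma ev_scaleV p A a : ev1 p != 0 -> evrel A a ->
  evrel ((polyK p)^-1 *: A) ((ev1 p)^-1 *: a).
Proof.
move=> p1 [q [Q [q1 -> ->]]]; exists (p * q), Q; split => //.
- by rewrite ev1M (mulf_neq0 p1 q1).
- by rewrite polyKM scalerA invfM.
- by rewrite ev1M scalerA invfM.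
Qed.

Lemma ev_one : evrel 1%:M 1%:M.
Proof.
exists 1, 1%:M; split; rewrite ?mapK_1 ?mapE_1 /ev1 ?hornerC ?oner_neq0 //.
  by rewrite /polyK rmorph1 invr1 scale1r.
by rewrite invr1 scale1r.
Qed.

Lemma ev_pow A a k : evrel A a -> evrel (A ^+ k) (a ^+ k).
Proof.
move=> H; elim: k => [|k IH]; first by rewrite !expr0 -!idmxE; exact: ev_one.
by rewrite !exprS -!mulmxE; apply: ev_mul.
Qed.

Lemma ev_sum (I : finType) (F : I -> 'M[Ku]_N) (f : I -> 'M[algC]_N) :
  (forall i, evrel (F i) (f i)) -> evrel (\sum_i F i) (\sum_i f i).
Proof.
move=> H; apply: (big_ind2 evrel) => //; last by move=> *; apply: ev_add.
have := ev_scaleK 0 ev_one.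
by rewrite /polyK rmorph0 scale0r /ev1 horner0 scale0r.
Qed.

Definition intm M := exists m, evrel M m.
End EV.

Definition XX : PX := 'X - 1%:P.

Section Desc.
Variable N : nat.
Implicit Types P Q : 'M[PX]_N.

Lemma ev1XX : ev1 XX = 0.
Proof. by rewrite /ev1 /XX hornerXsubC subrr. Qed.
Lemma XXn0 : XX != 0.
Proof. by rewrite -size_poly_eq0 /XX size_XsubC. Qed.

Lemma scaleXX_inj P Q : XX *: P = XX *: Q -> P = Q.
Proof.
move/matrixP=> H; apply/matrixP=> i j; move: (H i j); rewrite !mxE.
exact: (mulfI XXn0).
Qed.

Definition mes P := (\sum_(ij : 'I_N * 'I_N) size (P ij.1 ij.2))%N.
Definition quo P : 'M[PX]_N := \matrix_(i, j) (P i j %/ XX).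

Lemma quoP P : map_mx ev1 P = 0 -> P = XX *: quo P.
Proof.
move/matrixP=> H; apply/matrixP=> i j; rewrite !mxE.
have : XX %| P i j.
  by rewrite /XX dvdp_XsubCl; apply/rootP; move: (H i j); rewrite !mxE.
by move/divpKC.
Qed.

Lemma quo_mes P : P != 0 -> (mes (quo P) < mes P)%N.
Proof.
move=> Pn0.
have [[i j] Hij] : exists ij : 'I_N * 'I_N, P ij.1 ij.2 != 0.
  apply/existsP; move: Pn0; apply: contraNT; rewrite negb_exists => /forallP H.
  by apply/eqP/matrixP=> i j; rewrite mxE; move: (H (i, j)); rewrite negbK => /eqP.
have sz i' j' : size (quo P i' j') = (size (P i' j')).-1.
  by rewrite mxE size_divp ?XXn0 // /XX size_XsubC subn1.
rewrite /mes (bigD1 (i, j)) //= [X in (_ < X)%N](bigD1 (i, j)) //= sz.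
have hs : (0 < size (P i j))%N by rewrite size_poly_gt0.
rewrite -addSn leq_add //; first by rewrite prednK.
by apply: leq_sum => ij _; rewrite sz leq_pred.
Qed.

Variables (a b : PX) (Rm : 'M[PX]_N).
Hypothesis b1 : ev1 b != 0.

Lemma subst_step j P P' : P = XX *: P' ->
  XX ^+ j *: (a *: (P *m P)) = b *: P + XX *: (Rm *m P) ->
  XX ^+ j.+1 *: (a *: (P' *m P')) = b *: P' + XX *: (Rm *m P').
Proof.
move=> -> E; apply: scaleXX_inj; move: E.
rewrite -!scalemxAl -!scalemxAr !scalerA scalerDr !scalerA.
have -> : XX * XX ^+ j.+1 * a = XX ^+ j * a * XX * XX by rewrite exprS; ring.
by move=> ->; rewrite mulrC.
Qed.

Lemma ev_zero P j :
  XX ^+ j.+1 *: (a *: (P *m P)) = b *: P + XX *: (Rm *m P) -> map_mx ev1 P = 0.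
Proof.
move/(congr1 (map_mx ev1)); rewrite mapE_D !mapE_Z ev1XX.
have -> : ev1 (XX ^+ j.+1) = 0 by rewrite /ev1 horner_exp -/(ev1 XX) ev1XX expr0n.
rewrite !scale0r addr0 => /esym/eqP; rewrite scaler_eq0 (negPf b1) /=.
by move/eqP.
Qed.

Lemma desc_core m : forall P j, (mes P <= m)%N ->
  XX ^+ j.+1 *: (a *: (P *m P)) = b *: P + XX *: (Rm *m P) -> P = 0.
Proof.
elim: m => [|m IH] P j Hm E; have [->//|Pn0] := eqVneq P 0;
  have HP := quoP (ev_zero E); have Hq := quo_mes Pn0.
  by move: (leq_trans Hq Hm).
have := IH _ j.+1 _ (subst_step HP E).
rewrite -ltnS; move/(_ (leq_trans Hq Hm)) => Q0.
by rewrite HP Q0 scaler0.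
Qed.

Lemma descent P : map_mx ev1 P = 0 ->
  a *: (P *m P) = b *: P + XX *: (Rm *m P) -> P = 0.
Proof.
move=> H E; have HP := quoP H.
have E' : XX ^+ 0 *: (a *: (P *m P)) = b *: P + XX *: (Rm *m P) by rewrite expr0 scale1r.
have := desc_core (leqnn _) (subst_step HP E').
by move=> Q0; rewrite HP Q0 scaler0.
Qed.
End Desc.

Lemma ts_of N (s1 s2 S : 'M[algC]_N) : S != 0 -> s1 *m S = S -> s2 *m S = S ->
  S *m s1 = S -> S *m s2 = S -> S *m S = S *+ 6 -> trivial_summand s1 s2.
Proof.
move=> Sn0 H1 H2 H1r H2r HSS.
have [[i j] Hij] : exists ij : 'I_N * 'I_N, S ij.1 ij.2 != 0.
  apply/existsP; move: Sn0; apply: contraNT; rewrite negb_exists => /forallP H.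
  by apply/eqP/matrixP=> i j; rewrite mxE; move: (H (i, j)); rewrite negbK => /eqP.
set v := row i S.
set w := S *m delta_mx j (0 : 'I_1).
set W := kermx w.
have vw : v *m w != 0.
  rewrite /v /w mulmxA -row_mul HSS -colE.
  apply/eqP => /matrixP /(_ 0 0); rewrite !mxE => /eqP.
  move=> H; have : S i j *+ 6 == 0 by rewrite !mulrS mulr0n addr0.
  by rewrite mulrn_eq0 (negPf Hij).
have vn0 : v != 0 by apply: contraNneq vw => ->; rewrite mul0mx.
have wn0 : w != 0 by apply: contraNneq vw => ->; rewrite mulmx0.
exists v, W; split; first split.
- exact: vn0.
- by rewrite /v -row_mul H1r.
- by rewrite /v -row_mul H2r.
have cap0 : (v :&: W)%MS == 0.
  rewrite -mxrank_eq0; apply: contraT => Hc.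
  have Hr : \rank (v :&: W)%MS = \rank v.
    apply/eqP; rewrite eqn_leq mxrankS ?capmxSl //= rank_rV vn0.
    by rewrite lt0n.
  have := mxrank_leqif_sup (capmxSl v W); rewrite Hr.
  move=> [_ Hvc]; have : (v <= W)%MS.
    by apply: submx_trans (capmxSr v W); rewrite -Hvc.
  by rewrite sub_kermx (negPf vw).
split => //.
- by rewrite sub_kermx -mulmxA /w [s1 *m (S *m _)]mulmxA H1 -/w -sub_kermx.
- by rewrite sub_kermx -mulmxA /w [s2 *m (S *m _)]mulmxA H2 -/w -sub_kermx.
have rw : \rank w = 1%N.
  apply/eqP; rewrite eqn_leq rank_leq_col lt0n mxrank_eq0 wn0.
  by [].
have N0 : (0 < N)%N by case: (i) => k; apply: leq_ltn_trans; apply: leq0n.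
move: (mxrank_sum_cap v W); rewrite (eqP cap0) mxrank0 addn0 rank_rV vn0.
rewrite /W mxrank_ker rw /row_full => ->.
by rewrite add1n subn1 prednK.
Qed.

Lemma ev_lift N D (M : nat -> 'M[PX]_N) i : ev1 D != 0 ->
  evrel (lift_rep D M i) (spec_rep D M i).
Proof. by move=> HD; exists D, (M i). Qed.

Lemma ev_zero0 N : evrel (0 : 'M[Ku]_N) 0.
Proof.
have := ev_scaleK 0 (@ev_one N).
by rewrite /polyK rmorph0 scale0r /ev1 horner0 scale0r.
Qed.

Lemma uK1 : uK - 1 = polyK XX.
Proof. by rewrite /uK /XX /polyK rmorphB polyC1 rmorph1. Qed.

Lemma int_add N (A B : 'M[Ku]_N) : intm A -> intm B -> intm (A + B).
Proof. by move=> [a Ha] [b Hb]; exists (a + b); apply: ev_add. Qed.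
Lemma int_mul N (A B : 'M[Ku]_N) : intm A -> intm B -> intm (A * B).
Proof. by move=> [a Ha] [b Hb]; exists (a *m b); rewrite -mulmxE; apply: ev_mul. Qed.
Lemma int_c N : intm ((uK - 1)%:M : 'M[Ku]_N).
Proof.
exists (ev1 XX *: 1%:M); rewrite uK1.
have -> : (polyK XX)%:M = polyK XX *: (1%:M : 'M[Ku]_N) by rewrite scalemx1.
apply: ev_scaleK. exact: ev_one.
Qed.

Lemma int_pow N (A : 'M[Ku]_N) k : intm A -> intm (A ^+ k).
Proof. by move=> [a Ha]; exists (a ^+ k); apply: ev_pow. Qed.

Definition Emx (d N : nat) (x y : 'M[Ku]_N) :=
  (d%:R)^-1 *: \sum_(s < d) (x ^+ s *m y ^+ s).

Lemma int_Emx d N (x y : 'M[Ku]_N) : (1 <= d)%N -> intm x -> intm y -> intm (Emx d x y).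
Proof.
move=> hd [a Ha] [b Hb].
have hK : (d%:R : Ku) = polyK (d%:R) by rewrite /polyK rmorph_nat.
have hd1 : ev1 (d%:R) != 0 by rewrite /ev1 -polyC_natr hornerC pnatr_eq0 -lt0n.
have Hs : evrel (\sum_(s < d) (x ^+ s *m y ^+ s)) (\sum_(s < d) (a ^+ s *m b ^+ s)).
  by apply: ev_sum => s; apply: ev_mul; exact: ev_pow.
have := ev_scaleV hd1 Hs; rewrite -hK => H; eexists; exact: H.
Qed.

Lemma pow_comm (R : pzRingType) (g x x' : R) k : g * x = x' * g -> g * x ^+ k = x' ^+ k * g.
Proof.
move=> H; elim: k => [|k IH]; first by rewrite !expr0 mulr1 mul1r.
by rewrite !exprSr mulrA IH -mulrA H mulrA.
Qed.

Lemma Emx_comm d N (g x x' y y' : 'M[Ku]_N) : g * x = x' * g -> g * y = y' * g ->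
  g * Emx d x y = Emx d x' y' * g.
Proof.
move=> Hx Hy; rewrite /Emx -!mulmxE -scalemxAr -scalemxAl !mulmxE mulr_sumr mulr_suml.
congr (_ *: _); apply: eq_bigr => s _.
by rewrite mulrA (pow_comm s Hx) -[x' ^+ s * g * _]mulrA (pow_comm s Hy) mulrA.
Qed.

Lemma vS (F : fieldType) N (v : 'rV[F]_N) (G : nat -> 'M[F]_N) : v *m G 1%N = v -> v *m G 2%N = v ->
  v *m YTL_elt G = v *+ 6.
Proof.
move=> H1 H2; rewrite /YTL_elt !mulmxDr !mulmxA ?H1 ?H2 ?H1 ?H2 ?H1 ?H2 mulmx1.
by rewrite !mulrS mulr0n addr0 !addrA.
Qed.

Lemma YTLzz (R : fieldType) N (G : nat -> 'M[R]_N) : YTL_elt G = zz _ (G 1%N) (G 2%N).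
Proof. by rewrite /YTL_elt /zz !mulmxE idmxE. Qed.

Lemma zz_spec (R : pzRingType) (s1 s2 : R) : s1 * s1 = 1 -> s2 * s2 = 1 ->
  s1 * s2 * s1 = s2 * s1 * s2 ->
  [/\ s1 * zz _ s1 s2 = zz _ s1 s2, s2 * zz _ s1 s2 = zz _ s1 s2, zz _ s1 s2 * s1 = zz _ s1 s2,
      zz _ s1 s2 * s2 = zz _ s1 s2 & zz _ s1 s2 * zz _ s1 s2 = zz _ s1 s2 *+ 6].
Proof.
move=> H1 H2 Hb.
have H1' : s1 * s1 = 1 + 0 * 0 + 0 * (0 * s1) by rewrite H1 !mul0r !addr0.
have H2' : s2 * s2 = 1 + 0 * 0 + 0 * (0 * s2) by rewrite H2 !mul0r !addr0.
have cC0 : forall x : R, 0 * x = x * 0 by move=> x; rewrite mul0r mulr0.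
have h0 : forall g : R, g * 0 = 0 * g by move=> g; rewrite mul0r mulr0.
split.
- by rewrite (@L1 _ _ _ s2 _ H1') mul0r addr0 mul1r.
- by rewrite (@L2 _ _ s1 _ _ H2' Hb) mul0r addr0 mul1r.
- by rewrite {1}(zz1r _ s1 s2) -mulrA [(1 + s1) * s1]mulrDl mul1r H1 [s1 + 1]addrC -zz1r.
- by rewrite {1}(@zz2r _ s1 s2 Hb) -mulrA [(1 + s2) * s2]mulrDl mul1r H2 [s2 + 1]addrC -(@zz2r _ s1 s2 Hb).
- by rewrite (@zzsq _ 0 s1 s2 0 0 0 cC0 H1' H2' Hb (h0 _) (h0 _) (h0 _)) !mul0r addr0.
Qed.

Lemma poly_eq N (Z K : 'M[Ku]_N) q (Q : 'M[PX]_N) k (QK : 'M[PX]_N) :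
  ev1 q != 0 -> ev1 k != 0 ->
  Z = (polyK q)^-1 *: map_mx polyK Q -> K = (polyK k)^-1 *: map_mx polyK QK ->
  Z * Z = Z *+ 6 + (uK - 1)%:M * K * Z ->
  k *: (Q *m Q) = (6%:R * q * k) *: Q + XX *: (q *: (QK *m Q)).
Proof.
move=> q1 k1 -> -> E; apply: mapK_inj.
rewrite mapK_D !mapK_Z !mapK_M.
have an0 : polyK q != 0 by rewrite polyK_eq0 nz_of_ev.
have kn0 : polyK k != 0 by rewrite polyK_eq0 nz_of_ev.
have Ha : polyK q * (polyK q)^-1 = 1 := mulfV an0.
have Hk : polyK k * (polyK k)^-1 = 1 := mulfV kn0.
move: E; rewrite -!mulmxE mul_scalar_mx -!scalemxAl -!scalemxAr !scalerA -scaler_nat !scalerA.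
rewrite uK1.
have -> : polyK (6%:R * q * k) = 6%:R * polyK q * polyK k.
  by rewrite !polyKM /polyK rmorph_nat.
move: (polyK q) (polyK q)^-1 (polyK k) (polyK k)^-1 Ha Hk => a ai kk ki Ha Hk E.
have -> : kk *: (map_mx polyK Q *m map_mx polyK Q)
    = (kk * a * a) *: ((ai * ai) *: (map_mx polyK Q *m map_mx polyK Q)).
  rewrite scalerA; congr (_ *: _).
  have -> : kk * a * a * (ai * ai) = kk * (a * ai) * (a * ai) by ring.
  by rewrite Ha !mulr1.
rewrite E scalerDr !scalerA; congr (_ *: _ + _ *: _).
  have -> : kk * a * a * (6%:R * ai) = 6%:R * a * kk * (a * ai) by ring.
  by rewrite Ha mulr1.
have -> : kk * a * a * (polyK XX * ki * ai) = polyK XX * a * (a * ai) * (kk * ki) by ring.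
by rewrite Ha Hk !mulr1.
Qed.

Theorem mainTheorem7 (d n N : nat) (Gp Tp : nat -> 'M[{poly algC}]_N)
    (D : {poly algC}) :
  (1 <= d)%N -> (3 <= n)%N -> D.[1] != 0 ->
  YH_rep d n uK (lift_rep D Gp) (lift_rep D Tp) ->
  YH_irreducible n (lift_rep D Gp) (lift_rep D Tp) ->
  (YTL_elt (lift_rep D Gp) = 0 <->
   ~ trivial_summand (spec_rep D Gp 1%N) (spec_rep D Gp 2%N)).
Proof.
move=> hd hn hD HY _.
have hD' : ev1 D != 0 := hD.
case: n hn HY => [|[|[|n']]] // _ HY.
case: HY => _ [Hbr [_ [Htg [Htd Hq]]]].
set g := lift_rep D Gp; set t := lift_rep D Tp.
set s := spec_rep D Gp.
have evg i : evrel (g i) (s i) := ev_lift Gp i hD'.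
have intt j : intm (t j) by exists (spec_rep D Tp j); exact: ev_lift.
have tinv j : (1 <= j <= n'.+3)%N -> invmx (t j) = t j ^+ (d - 1).
  move=> hj.
  have H : t j ^+ (d - 1) *m t j = 1%:M.
    by rewrite mulmxE -exprSr subn1 prednK // Htd.
  have [_ u] := mulmx1_unit H.
  by rewrite -[invmx _]mul1mx -H mulmxK.
set e1 := Emx d (t 1%N) (t 2%N ^+ (d - 1)).
set e2 := Emx d (t 2%N) (t 3%N ^+ (d - 1)).
set e13 := Emx d (t 1%N) (t 3%N ^+ (d - 1)).
have eE1 : e_mx d t 1%N = e1 by rewrite /e_mx /e1 /Emx (tinv 2%N); [exact: erefl | done].
have eE2 : e_mx d t 2%N = e2 by rewrite /e_mx /e2 /Emx (tinv 3%N); [exact: erefl | done].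
have ie1 : intm e1 := int_Emx hd (intt _) (int_pow _ (intt _)).
have ie2 : intm e2 := int_Emx hd (intt _) (int_pow _ (intt _)).
have ie13 : intm e13 := int_Emx hd (intt _) (int_pow _ (intt _)).
pose c : 'M[Ku]_N := (uK - 1)%:M.
have cC : forall x, c * x = x * c.
  move=> x; rewrite -!mulmxE scalar_mxC; exact: erefl.
have Hq1 : g 1%N *m g 1%N = 1%:M + (uK - 1) *: e1 + (uK - 1) *: (e1 *m g 1%N).
  rewrite -eE1; exact: (Hq 1%N isT).
have Hq2 : g 2%N *m g 2%N = 1%:M + (uK - 1) *: e2 + (uK - 1) *: (e2 *m g 2%N).
  rewrite -eE2; exact: (Hq 2%N isT).
have HQ1 : g 1%N * g 1%N = 1 + c * e1 + c * (e1 * g 1%N).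
  rewrite -!mulmxE -idmxE !mul_scalar_mx; exact: Hq1.
have HQ2 : g 2%N * g 2%N = 1 + c * e2 + c * (e2 * g 2%N).
  rewrite -!mulmxE -idmxE !mul_scalar_mx; exact: Hq2.
have Hb : g 1%N *m g 2%N *m g 1%N = g 2%N *m g 1%N *m g 2%N := Hbr 1%N isT isT.
have HBr : g 1%N * g 2%N * g 1%N = g 2%N * g 1%N * g 2%N.
  rewrite -!mulmxE; exact: Hb.
have gt i j : (0 < i <= n'.+2)%N -> (0 < j <= n'.+3)%N ->
    g i * t (swapi i j) = t j * g i.
  move=> hi hj; rewrite -!mulmxE; symmetry; exact: Htg.
have g1t1 : g 1%N * t 1%N = t 2%N * g 1%N := gt 1%N 2%N isT isT.
have g1t2 : g 1%N * t 2%N = t 1%N * g 1%N := gt 1%N 1%N isT isT.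
have g1t3 : g 1%N * t 3%N = t 3%N * g 1%N := gt 1%N 3%N isT isT.
have g2t1 : g 2%N * t 1%N = t 1%N * g 2%N := gt 2%N 1%N isT isT.
have g2t2 : g 2%N * t 2%N = t 3%N * g 2%N := gt 2%N 3%N isT isT.
have Hc21 : g 2%N * e1 = e13 * g 2%N := @Emx_comm d _ _ _ _ _ _ g2t1 (pow_comm (d - 1) g2t2).
have Hc12 : g 1%N * e2 = e13 * g 1%N := @Emx_comm d _ _ _ _ _ _ g1t2 (pow_comm (d - 1) g1t3).
have Hc113 : g 1%N * e13 = e2 * g 1%N := @Emx_comm d _ _ _ _ _ _ g1t1 (pow_comm (d - 1) g1t3).
have HZ := zzsq _ _ _ _ _ _ _ cC HQ1 HQ2 HBr Hc21 Hc12 Hc113.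
rewrite -(YTLzz g) in HZ.
have iK : intm (Ksum _ c e1 e2 e13).
  rewrite /Ksum /K12 /K21 /K121 /K21'.
  repeat first [apply: int_add | apply: int_mul | apply: int_c | assumption].
have evZ : evrel (YTL_elt g) (YTL_elt s).
  rewrite /YTL_elt.
  repeat first [apply: ev_add | apply: ev_mul | apply: ev_one | apply: evg].
have [m1 Hm1] := ie1.
have [m2 Hm2] := ie2.
have s1sq : s 1%N *m s 1%N = 1%:M.
  have A := ev_mul (evg 1%N) (evg 1%N).
  have B : evrel (g 1%N *m g 1%N) (1%:M + ev1 XX *: m1 + ev1 XX *: (m1 *m s 1%N)).
    rewrite Hq1 uK1; apply: ev_add; first apply: ev_add.
    - exact: ev_one.
    - exact: ev_scaleK.
    - by apply: ev_scaleK; apply: ev_mul.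
  by rewrite (ev_uniq A B) ev1XX !scale0r !addr0.
have s2sq : s 2%N *m s 2%N = 1%:M.
  have A := ev_mul (evg 2%N) (evg 2%N).
  have B : evrel (g 2%N *m g 2%N) (1%:M + ev1 XX *: m2 + ev1 XX *: (m2 *m s 2%N)).
    rewrite Hq2 uK1; apply: ev_add; first apply: ev_add.
    - exact: ev_one.
    - exact: ev_scaleK.
    - by apply: ev_scaleK; apply: ev_mul.
  by rewrite (ev_uniq A B) ev1XX !scale0r !addr0.
have sbr : s 1%N *m s 2%N *m s 1%N = s 2%N *m s 1%N *m s 2%N.
  have A := ev_mul (ev_mul (evg 1%N) (evg 2%N)) (evg 1%N).
  have B := ev_mul (ev_mul (evg 2%N) (evg 1%N)) (evg 2%N).
  rewrite Hb in A; exact: ev_uniq A B.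
have [S1 S2 S1r S2r SS] : [/\ s 1%N * zz _ (s 1%N) (s 2%N) = zz _ (s 1%N) (s 2%N),
      s 2%N * zz _ (s 1%N) (s 2%N) = zz _ (s 1%N) (s 2%N),
      zz _ (s 1%N) (s 2%N) * s 1%N = zz _ (s 1%N) (s 2%N),
      zz _ (s 1%N) (s 2%N) * s 2%N = zz _ (s 1%N) (s 2%N) &
      zz _ (s 1%N) (s 2%N) * zz _ (s 1%N) (s 2%N) = zz _ (s 1%N) (s 2%N) *+ 6].
  by apply: zz_spec; rewrite -mulmxE -?idmxE.
rewrite -(YTLzz s) -!mulmxE in S1 S2 S1r S2r SS.
split.
- move=> Z0 [v [W [[vn0 Hv1 Hv2] _]]].
  have S0 : YTL_elt s = 0.
    apply: (ev_uniq evZ); rewrite Z0; exact: ev_zero0.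
  move: (vS Hv1 Hv2); rewrite S0 mulmx0 => /esym/eqP.
  by rewrite -scaler_nat scaler_eq0 pnatr_eq0 /= (negPf vn0).
- move=> nTS; have [Z0|Zn0] := eqVneq (YTL_elt g) 0; first exact: Z0.
  exfalso; apply: nTS.
  apply: (ts_of (S := YTL_elt s)); [|exact: S1|exact: S2|exact: S1r|exact: S2r|exact: SS].
  move: evZ iK => [q [Q [q1 EZ ES]]] [mK [k [QK [k1 EK _]]]].
  have PE := poly_eq q1 k1 EZ EK HZ; rewrite [q *: (QK *m Q)]scalemxAl in PE.
  apply/negP => /eqP S0.
  have Q0 : map_mx ev1 Q = 0.
    move: S0; rewrite ES => /eqP; rewrite scaler_eq0 invr_eq0 (negPf q1) /=.
    by move/eqP.
  have b1 : ev1 (6%:R * q * k) != 0.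
    have h6 : ev1 6%:R != 0 by rewrite /ev1 -polyC_natr hornerC pnatr_eq0.
    by rewrite !ev1M (mulf_neq0 (mulf_neq0 h6 q1) k1).
  have := descent b1 Q0 PE.
  move=> QQ; move: Zn0; rewrite EZ QQ.
  have -> : map_mx polyK (0 : 'M[PX]_N) = 0.
    by apply/matrixP => i j; rewrite !mxE /polyK rmorph0.
  by rewrite scaler0 eqxx.
Qed.
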